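(* Let $q$ be an odd prime power with $q\equiv2\pmod 3$, let $m,n$ be positive integers, let $\omega\in\mathbb{F}_{q^2}$ be an element of multiplicative order $3$, and let $\varepsilon\in\mathbb{F}_q^*\cup\{\pm\omega,\pm\omega^2\}$. Then $$f(x)=(x+\omega x^q)^m+\varepsilon(\omega x-x^q)^n$$ is a permutation polynomial of $\mathbb{F}_{q^2}$ if and only if $\gcd(mn,q-1)=1$.
   Context: A polynomial is a permutation polynomial of $\mathbb{F}_{q^2}$ if the map it induces on $\mathbb{F}_{q^2}$ is bijective. *)

(* Defs.v *)
From mathcomp Require Import all_boot all_algebra all_field.
Set Implicit Arguments. Unset Strict Implicit. Unset Printing Implicit Defensive.
Import GRing.Theory.
Local Open Scope ring_scope.

Definition prime_power (q : nat) : Prop :=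
  exists p k : nat, prime p /\ (0 < k)%N /\ q = (p ^ k)%N.

(* The subfield F_q of F_{q^2}: elements fixed by x |-> x^q. *)
Definition in_subfield_q (F : finFieldType) (q : nat) (x : F) : bool :=
  x ^+ q == x.

Definition is_perm_map (F : finFieldType) (f : F -> F) : Prop := bijective f.

(* Main.v *)
Require Import Defs.
From mathcomp Require Import all_boot all_algebra all_field.
From mathcomp Require Import ring zify cyclic.
Import GRing.Theory.
Local Open Scope ring_scope.
Set Implicit Arguments. Unset Strict Implicit.

Lemma fix_pow_one (F : fieldType) (q m : nat) (r : F) :
  (0 < q)%N -> (0 < m)%N -> coprime m (q - 1) -> r != 0 -> r ^+ q = r -> r ^+ m = 1 -> r = 1.
Proof.
move=> q0 m0 cop r0 rq rm.
have rq1 : r ^+ (q - 1) = 1.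
  apply: (mulIf r0); rewrite mul1r -exprSr.
  by rewrite subn1 prednK.
have [a _ ha] := Bezoutl (q - 1) m0.
move: cop; rewrite /coprime => /eqP g1; rewrite g1 in ha.
have [k hk] : exists k, (1 + a * (q - 1) = k * m)%N by exists ((1 + a * (q - 1)) %/ m)%N; rewrite divnK.
have : r ^+ (1 + a * (q - 1)) = 1 by rewrite hk mulnC exprM rm expr1n.
by rewrite exprD expr1 mulnC exprM rq1 expr1n mulr1.
Qed.

Lemma line_pow_inj (F : fieldType) (q m : nat) (c u v : F) :
  (0 < q)%N -> (0 < m)%N -> coprime m (q - 1) -> c != 0 ->
  u ^+ q = c * u -> v ^+ q = c * v -> u ^+ m = v ^+ m -> u = v.
Proof.
move=> q0 m0 cop c0 hu hv huv.
have [v0'|v0] := eqVneq v 0.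
  by move: huv; rewrite v0' (expr0n _ m) (negPf (lt0n_neq0 m0)) => /eqP; rewrite expf_eq0 => /andP[_ /eqP].
have u0 : u != 0.
  apply/eqP=> u0; move: huv; rewrite u0 (expr0n _ m) (negPf (lt0n_neq0 m0)) => /esym/eqP.
  by rewrite expf_eq0 (negPf v0) andbF.
apply: divr1_eq.
apply: (fix_pow_one q0 m0 cop).
- by rewrite mulf_neq0 ?invr_eq0.
- by rewrite expr_div_n hu hv invfM mulrACA divff // mul1r.
- by rewrite expr_div_n huv divff // expf_neq0.
Qed.

Lemma cube_facts (F : fieldType) (w : F) : 3.-primitive_root w ->
  [/\ w ^+ 3 = 1, w != 0 & 1 + w + w ^+ 2 = 0].
Proof.
move=> pw; have w3 := prim_expr_order pw.
have w1 : w != 1 by have := prim_order_dvd pw 1; rewrite expr1 => <-.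
split => //.
  by apply/eqP => w0; move: w3; rewrite w0 expr0n => /eqP; rewrite eq_sym oner_eq0.
have : (w - 1) * (1 + w + w ^+ 2) = 0.
  have -> : (w - 1) * (1 + w + w ^+ 2) = w ^+ 3 - 1 by ring.
  by rewrite w3 subrr.
by move/eqP; rewrite mulf_eq0 subr_eq0 (negPf w1) => /eqP.
Qed.

Lemma cube_neg (F : fieldType) (w : F) a b : 2%:R != 0 :> F -> w ^+ 3 = 1 ->
  w ^+ a != - w ^+ b.
Proof.
move=> h2 w3; apply/eqP => e.
have e2 : w ^+ (a + 2 * b) = -1.
  rewrite exprD e mulNr -exprD (_ : (b + 2 * b = 3 * b)%N); last by lia.
  by rewrite exprM w3 expr1n.
have : (w ^+ (a + 2 * b)) ^+ 3 = 1 by rewrite -exprM mulnC exprM w3 expr1n.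
rewrite e2 => /eqP; rewrite -signr_odd /= expr1 -subr_eq0 -opprD oppr_eq0.
by rewrite (natrD F 1 1) in h2; rewrite (negPf h2).
Qed.
Lemma frob_setup (F : finFieldType) (q : nat) :
  prime_power q -> odd q -> #|F| = (q ^ 2)%N ->
  [/\ (forall x y : F, (x + y) ^+ q = x ^+ q + y ^+ q),
      (forall x : F, (- x) ^+ q = - x ^+ q),
      (forall x : F, (x ^+ q) ^+ q = x) &
      2%:R != 0 :> F].
Proof.
move=> [p [k [pp [k0 ->]]]] oq cF.
have Hp : p \in [pchar F].
  by apply: (card_finPcharP (n := (k * 2)%N)) => //; rewrite cF expnM.
have op : odd p by move: oq; rewrite oddX; case: (k) k0.
split.
- move=> x y; apply: exprDn_pchar.
  by rewrite (eq_pnat _ (pcharf_eq Hp)) pnatX pnat_id.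
- move=> x; rewrite exprNn -signr_odd oddX op orbT expr1 mulN1r //.
- by move=> x; rewrite -exprM mulnn -cF expf_card.
- rewrite -(dvdn_pcharf Hp) dvdn_prime2 //; apply/eqP => e; by rewrite e in op.
Qed.

Lemma prim_root_exists (F : finFieldType) :
  {z : F | (#|F|.-1).-primitive_root z}.
Proof.
pose rs := enum [pred x : F | x != 0].
have cF : (0 < #|F|)%N by apply/card_gt0P; exists 0.
have h : has (#|F|.-1).-primitive_root rs.
  apply: has_prim_root.
  - by rewrite -subn1 subn_gt0 finNzRing_gt1.
  - apply/allP => x; rewrite mem_enum /= => x0; rewrite unity_rootE.
    apply/eqP; apply: (mulIf x0); rewrite mul1r -exprSr prednK //.
    exact: expf_card.
  - exact: enum_uniq.
  - by rewrite -cardE cardC1.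
by move: h => /hasP/sig2W[z _ hz]; exists z.
Qed.
Lemma cardN (F : finFieldType) q : #|F| = (q ^ 2)%N -> (#|F|.-1 = (q - 1) * (q + 1))%N.
Proof. by move=> cF; rewrite cF -subn1 -{2}(exp1n 2) subn_sqr. Qed.

Lemma root_qm1 (F : finFieldType) (q : nat) (c : F) :
  #|F| = (q ^ 2)%N -> (1 < q)%N -> c ^+ (q + 1) = 1 ->
  exists2 x : F, x != 0 & x ^+ (q - 1) = c.
Proof.
move=> cF q1 hc.
have [z pz] := prim_root_exists F.
have cN := cardN cF.
have N0 : (0 < #|F|.-1)%N by rewrite cN muln_gt0 subn_gt0 q1 addn1.
have cN1 : c ^+ (#|F|.-1) = 1 by rewrite cN mulnC exprM hc expr1n.
have [[i _] /= hi] := prim_rootP pz cN1.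
have : (#|F|.-1 %| i * (q + 1))%N by rewrite (prim_order_dvd pz) exprM -hi hc.
rewrite cN dvdn_pmul2r ?addn1 // => dq.
exists (z ^+ (i %/ (q - 1))).
  rewrite expf_neq0 //; apply/eqP => z0; move: (prim_expr_order pz).
  by rewrite z0 (expr0n _ _) (negPf (lt0n_neq0 N0)) => /eqP; rewrite eq_sym oner_eq0.
by rewrite -exprM divnK.
Qed.

Lemma zeta_ex (F : finFieldType) (q r : nat) :
  #|F| = (q ^ 2)%N -> (1 < q)%N -> (1 < r)%N -> (r %| q - 1)%N ->
  exists zeta : F, [/\ zeta != 1, zeta ^+ r = 1 & zeta ^+ q = zeta].
Proof.
move=> cF q1 r1 rq.
have [z pz] := prim_root_exists F.
have cN := cardN cF.
have q10 : (0 < q - 1)%N by rewrite subn_gt0.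
exists (z ^+ ((q + 1) * ((q - 1) %/ r))).
have zr : (z ^+ ((q + 1) * ((q - 1) %/ r))) ^+ r = 1.
  by rewrite -exprM -mulnA divnK // mulnC -cN prim_expr_order.
split => //.
- rewrite -(prim_order_dvd pz) cN; apply/negP => /dvdn_leq.
  rewrite muln_gt0 addn1 divn_gt0 ?(ltnW r1) //= ?(dvdn_leq q10 rq) // mulnC.
  move/(_ isT); move=> h; have := ltn_Pdiv r1 q10; move: h; set a := ((q - 1) %/ r)%N; nia.

- set t := z ^+ _ in zr *.
  have t0 : t ^+ (q - 1) = 1 by rewrite -(divnK rq) mulnC exprM zr expr1n.
  by rewrite -{1}(subnK (ltnW q1)) exprD t0 mul1r expr1.
Qed.
Lemma sep_lemma (R : comRingType) (a b p1 q1 p2 q2 : R) :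
  p1 + q1 = p2 + q2 -> a * p1 + b * q1 = a * p2 + b * q2 -> (a - b) * (p1 - p2) = 0.
Proof.
move=> h1 h2.
have e : q2 = p1 + q1 - p2 by rewrite h1 addrC addKr.
rewrite e in h2.
have -> : (a - b) * (p1 - p2) = (a * p1 + b * q1) - (a * p2 + b * (p1 + q1 - p2)) by ring.
by rewrite h2 subrr.
Qed.

Unset Implicit Arguments.

Theorem proposition3p7 (F : finFieldType) (q m n : nat) (w eps : F) :
  prime_power q -> odd q -> (q %% 3 = 2)%N ->
  #|F| = (q ^ 2)%N ->
  (0 < m)%N -> (0 < n)%N ->
  3.-primitive_root w ->
  ((in_subfield_q q eps && (eps != 0)) ||
   [|| eps == w, eps == - w, eps == w ^+ 2 | eps == - w ^+ 2]) ->
  (is_perm_map (fun x : F => (x + w * x ^+ q) ^+ m + eps * (w * x - x ^+ q) ^+ n)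
   <-> coprime (m * n) (q - 1)).
Proof.
move=> pq oq q3 cF m0 n0 pw heps.
have [Hadd Hopp Hinv H2] := frob_setup pq oq cF.
have [w3 w0 wsum] := cube_facts pw.
have q1 : (1 < q)%N.
  case: pq => p [k [pp [k0 ->]]]; apply: (leq_trans (prime_gt1 pp)).
  by rewrite -{1}(expn1 p) leq_exp2l ?prime_gt1.
have q0 : (0 < q)%N by apply: ltnW.
have Hwq : w ^+ q = w ^+ 2 by rewrite -(expr_mod q w3) q3.
have hw1 : w ^+ (q + 1) = 1 by rewrite exprD Hwq expr1 -exprSr w3.
split.
- rewrite /is_perm_map => /bij_inj finj.
  apply: contraT => nc; exfalso.
  rewrite /coprime in nc.
  set d := gcdn (m * n) (q - 1) in nc.
  have d0 : (0 < d)%N by rewrite gcdn_gt0 subn_gt0 q1 orbT.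
  have d1 : (1 < d)%N by move: nc d0; case: (d) => [|[|]].
  have pr := pdiv_prime d1.
  have rd := pdiv_dvd d.
  have rq : (pdiv d %| q - 1)%N by apply: (dvdn_trans rd); apply: dvdn_gcdr.
  have rmn : (pdiv d %| m * n)%N by apply: (dvdn_trans rd); apply: dvdn_gcdl.
  have [zeta [z1 zr zq]] := zeta_ex cF q1 (prime_gt1 pr) rq.
  have zpow : forall k, (pdiv d %| k)%N -> zeta ^+ k = 1.
    by move=> k /dvdnP [j ->]; rewrite mulnC exprM zr expr1n.
  have key : forall x, x != 0 ->
      (zeta * x + w * (zeta * x) ^+ q) ^+ m + eps * (w * (zeta * x) - (zeta * x) ^+ q) ^+ n
      = (x + w * x ^+ q) ^+ m + eps * (w * x - x ^+ q) ^+ n -> False.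
    move=> x x0 e; move: (finj _ _ e) => /eqP.
    rewrite -{2}(mul1r x) (inj_eq (mulIf x0)); exact/negP.
  case/orP: (eqbLR (Euclid_dvdM m n pr) rmn) => [rm | rn].
  + have [x x0 hx] := root_qm1 cF q1 hw1.
    have xq : x ^+ q = w * x by rewrite -{1}(subnK (ltnW q1)) exprD hx expr1.
    apply: (key x x0).
    rewrite [(zeta * x) ^+ q]exprMn zq xq.
    rewrite (_ : zeta * x + w * (zeta * (w * x)) = zeta * (x + w * (w * x))); last by ring.
    rewrite (_ : w * (zeta * x) - zeta * (w * x) = 0); last by ring.
    by rewrite subrr exprMn (zpow m rm) mul1r.
  + have hc : (- w ^+ 2) ^+ (q + 1) = 1.
      by rewrite exprNn exprAC hw1 expr1n mulr1 -signr_odd addn1 /= oq.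
    have [x x0 hx] := root_qm1 cF q1 hc.
    have xq : x ^+ q = - w ^+ 2 * x by rewrite -{1}(subnK (ltnW q1)) exprD hx expr1.
    apply: (key x x0).
    rewrite [(zeta * x) ^+ q]exprMn zq xq.
    rewrite (_ : zeta * x + w * (zeta * (- w ^+ 2 * x)) = zeta * x * (1 - w ^+ 3)); last by ring.
    rewrite (_ : x + w * (- w ^+ 2 * x) = x * (1 - w ^+ 3)); last by ring.
    rewrite (_ : w * (zeta * x) - zeta * (- w ^+ 2 * x) = zeta * (w * x - - w ^+ 2 * x)); last by ring.
    by rewrite w3 subrr !mulr0 (expr0n _ m) (negPf (lt0n_neq0 m0)) exprMn (zpow n rn) mul1r.
- move=> cop; rewrite /is_perm_map; apply: injF_bij => x y /= hxy.
  have [cm cn] : coprime m (q - 1) /\ coprime n (q - 1).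
    by move: cop; rewrite coprimeMl => /andP.
  have e2 : (2 %| q - 1)%N by rewrite dvdn2 oddB ?(ltnW q1) // oq.
  have on : odd n.
    apply: (contraTT _ cn) => en; apply/negP; rewrite /coprime => /eqP g1.
    have : (2 %| gcdn n (q - 1))%N by rewrite dvdn_gcd dvdn2 en e2.
    by rewrite g1.
  have [eps0 [j ej]] : eps != 0 /\ exists j, eps ^+ q = w ^+ j * eps.
    case/orP: heps => [/andP[/eqP h e0]|].
      by split => //; exists 0%N; rewrite expr0 mul1r.
    case/or4P => /eqP ->.
    - by split => //; exists 1%N; rewrite Hwq expr1 expr2.
    - by split; [rewrite oppr_eq0 | exists 1%N; rewrite Hopp Hwq expr1 mulrN expr2].
    - by split; [rewrite expf_neq0 | exists 2%N; rewrite exprAC Hwq expr2].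
    - by split; [rewrite oppr_eq0 expf_neq0 | exists 2%N; rewrite Hopp exprAC Hwq mulrN expr2].
  have HU : forall t, (t + w * t ^+ q) ^+ q = w ^+ 2 * (t + w * t ^+ q).
    move=> t; rewrite Hadd exprMn Hwq Hinv.
    by rewrite mulrDr mulrA -exprSr w3 mul1r addrC.
  have HV : forall t, (w * t - t ^+ q) ^+ q = - w ^+ 2 * (w * t - t ^+ q).
    move=> t; rewrite Hadd Hopp exprMn Hwq Hinv.
    by rewrite mulNr mulrBr mulrA -exprSr w3 mul1r opprB.
  have HP : forall t, ((t + w * t ^+ q) ^+ m) ^+ q = w ^+ (2 * m) * (t + w * t ^+ q) ^+ m.
    by move=> t; rewrite exprAC HU exprMn -exprM.
  have HQ : forall t, (eps * (w * t - t ^+ q) ^+ n) ^+ q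
      = - w ^+ (j + 2 * n) * (eps * (w * t - t ^+ q) ^+ n).
    move=> t; rewrite exprMn ej exprAC HV exprMn exprNn -signr_odd on expr1 -exprM exprD.
    by ring.
  have e3 := congr1 (fun t => t ^+ q) hxy; rewrite /= !Hadd !HP !HQ in e3.
  have := sep_lemma hxy e3.
  move/eqP; rewrite mulf_eq0 subr_eq0 (negPf (cube_neg _ _ H2 w3)) /= subr_eq0 => /eqP ePu.
  have eVn : (w * x - x ^+ q) ^+ n = (w * y - y ^+ q) ^+ n.
    by rewrite ePu in hxy; move/addrI: hxy; apply: mulfI.
  have eU := line_pow_inj q0 m0 cm (expf_neq0 2 w0) (HU x) (HU y) ePu.
  have nw2 : - w ^+ 2 != 0 by rewrite oppr_eq0 expf_neq0.
  have eV := line_pow_inj q0 n0 cn nw2 (HV x) (HV y) eVn.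
  have key : forall t, w * (t + w * t ^+ q) - (w * t - t ^+ q) = - (w * t ^+ q).
    move=> t; have -> : w * (t + w * t ^+ q) - (w * t - t ^+ q) = (1 + w + w ^+ 2) * t ^+ q - w * t ^+ q by ring.
    by rewrite wsum mul0r sub0r.
  have : - (w * x ^+ q) = - (w * y ^+ q) by rewrite -!key eU eV.
  move/oppr_inj/(mulfI w0) => exq.
  by rewrite -(Hinv x) exq Hinv.
Qed.
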